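(* Let $n\ge2$, $k\ge1$ be integers, $p\in(0,1/2]$ with $k\le np/2-1$, $\pi$ a probability vector on $[k]$, $i\in[k]$, and $j$ an integer with $1\le j\le np/2-k$. Then $$\Big|\beta_1(j,i)-\frac{\pi[i]}{p}\Big|=O\Big(\frac{e^{-\Omega(np)}}{p}\Big),\qquad \big|\beta_0(j,i)-(1-\pi[i])\big|=O\big(p\,e^{-\Omega(np)}\big),$$ where $O(\cdot),\Omega(\cdot)$ hide universal constants. Consequently, if $np=\Omega\big(\log\max_{i'\in[k]}\frac{1}{\pi[i']}\big)$ with a sufficiently large universal constant hidden in the $\Omega$, then $\beta_1(j,i)\ge\frac{\pi[i]}{2p}$ and $0\le\beta_0(j,i)\le1$.
   Context: $B_{n,p,k'}=\sum_{i'=k'}^n\binom{n}{i'}p^{i'}(1-p)^{n-i'}$. Define $\beta_1(j,i)=\frac{\pi[i]B_{n,p,j+k}}{p}+\big(B_{n-1,p,j+k-1}-\frac{1-pB_{n-1,p,j+k-1}}{1-p}\big)(1-\pi[i])$ and $\beta_0(j,i)=\frac{1-pB_{n-1,p,j+k-1}}{1-p}(1-\pi[i])$. *)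

(* Defs.v *)
From Stdlib Require Import Reals List.
Open Scope R_scope.

Definition Btail (n : nat) (p : R) (k' : nat) : R :=
  sum_f_R0 (fun i' => if Nat.leb k' i' then C n i' * p ^ i' * (1 - p) ^ (n - i') else 0) n.

(* pi is indexed on [k] = {1,...,k} *)
Definition beta1 (n k : nat) (p : R) (pi : nat -> R) (j i : nat) : R :=
  pi i * Btail n p (j + k) / p
  + (Btail (n - 1) p (j + k - 1) - (1 - p * Btail (n - 1) p (j + k - 1)) / (1 - p))
    * (1 - pi i).

Definition beta0 (n k : nat) (p : R) (pi : nat -> R) (j i : nat) : R :=
  (1 - p * Btail (n - 1) p (j + k - 1)) / (1 - p) * (1 - pi i).

Definition is_prob_vector (k : nat) (pi : nat -> R) : Prop :=
  (forall i, (1 <= i <= k)%nat -> 0 <= pi i) /\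
  sum_f_R0 (fun x => pi (S x)) (k - 1) = 1.

Definition max_inv (k : nat) (pi : nat -> R) : R :=
  fold_right Rmax 0 (map (fun i => / pi i) (seq 1 k)).

(* Main.v *)
Require Import Defs.
From Stdlib Require Import Reals Lra Lia List.
Open Scope R_scope.

Lemma exp_le' x y : x <= y -> exp x <= exp y.
Proof. intros [H|H]; [left; apply exp_increasing; auto| subst; lra]. Qed.

Lemma ln_le' x y : 0 < x -> x <= y -> ln x <= ln y.
Proof. intros Hx [H|H]; [left; apply ln_increasing; auto| subst; lra]. Qed.

Lemma C_nonneg n i : 0 <= C n i.
Proof.
  unfold C. apply Rmult_le_pos. left; apply INR_fact_lt_0.
  left; apply Rinv_0_lt_compat, Rmult_lt_0_compat; apply INR_fact_lt_0.
Qed.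

Lemma exp_pow' y n : exp y ^ n = exp (INR n * y).
Proof. rewrite <- Rpower_pow by apply exp_pos. unfold Rpower. now rewrite ln_exp. Qed.

Definition Ltail (n : nat) (p : R) (m : nat) : R :=
  sum_f_R0 (fun i => if Nat.leb m i then 0 else C n i * p ^ i * (1 - p) ^ (n - i)) n.

Lemma Btail_Ltail n p m : Btail n p m = 1 - Ltail n p m.
Proof.
  assert (H : Btail n p m + Ltail n p m = 1).
  { unfold Btail, Ltail. rewrite <- plus_sum.
    transitivity ((p + (1 - p)) ^ n); [| replace (p + (1-p)) with 1 by ring; apply pow1].
    rewrite binomial. apply sum_eq. intros i _. cbv beta; destruct (Nat.leb m i); ring. }
  lra.
Qed.

Lemma Ltail_nonneg n p m : 0 <= p <= 1 -> 0 <= Ltail n p m.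
Proof.
  intros Hp. unfold Ltail. apply cond_pos_sum. intros i. destruct (Nat.leb m i). lra.
  apply Rmult_le_pos. apply Rmult_le_pos. apply C_nonneg. apply pow_le; lra. apply pow_le; lra.
Qed.

Lemma Ltail_bound n p m : 0 < p < 1 -> (1 <= m)%nat ->
  Ltail n p m <= exp (INR m - 1 - INR n * p * (1 - / exp 1)).
Proof.
  intros Hp Hm. set (x := exp 1).
  assert (Hx : 1 < x) by (unfold x; pose proof (exp_ineq1 1 ltac:(lra)); lra).
  assert (Hx0 : 0 < x) by lra.
  apply Rle_trans with (sum_f_R0 (fun i => C n i * (p * / x) ^ i * (1 - p) ^ (n - i) * x ^ (m - 1)) n).
  { unfold Ltail. apply sum_Rle. intros i Hi.
    destruct (Nat.leb m i) eqn:E.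
    - apply Rmult_le_pos. apply Rmult_le_pos. apply Rmult_le_pos. apply C_nonneg.
      apply pow_le. apply Rmult_le_pos. lra. left; apply Rinv_0_lt_compat; lra.
      apply pow_le; lra. apply pow_le; lra.
    - apply Nat.leb_gt in E.
      replace (m - 1)%nat with ((m - 1 - i) + i)%nat by lia.
      rewrite pow_add, Rpow_mult_distr.
      replace (C n i * (p ^ i * (/ x) ^ i) * (1 - p) ^ (n - i) * (x ^ (m - 1 - i) * x ^ i))
        with (C n i * p ^ i * (1 - p) ^ (n - i) * (x ^ (m - 1 - i) * ((/ x) ^ i * x ^ i))) by ring.
      rewrite <- Rpow_mult_distr, Rinv_l, pow1 by lra. rewrite Rmult_1_r.
      rewrite <- (Rmult_1_r (C n i * p ^ i * (1 - p) ^ (n - i))) at 1.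
      apply Rmult_le_compat_l.
      apply Rmult_le_pos. apply Rmult_le_pos. apply C_nonneg. apply pow_le; lra. apply pow_le; lra.
      apply pow_R1_Rle; lra. }
  rewrite <- scal_sum.
  rewrite <- binomial.
  assert (H1 : x ^ (m - 1) = exp (INR m - 1)).
  { unfold x. rewrite exp_pow', minus_INR by lia. simpl INR. f_equal; ring. }
  rewrite H1.
  replace (INR m - 1 - INR n * p * (1 - / x)) with ((INR m - 1) + INR n * (- (p * (1 - / x)))) by ring.
  rewrite exp_plus. apply Rmult_le_compat_l. left; apply exp_pos.
  rewrite <- exp_pow'. apply pow_incr. split.
  - assert (0 < p * / x) by (apply Rmult_lt_0_compat; [lra| apply Rinv_0_lt_compat; lra]). lra.
  - eapply Rle_trans; [| apply exp_ineq1_le]. lra.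
Qed.

Lemma inv_e : / exp 1 <= 4/9.
Proof.
  assert (H : exp 1 = exp (1/2) * exp (1/2)) by (rewrite <- exp_plus; f_equal; lra).
  pose proof (exp_ineq1_le (1/2)).
  assert (9/4 <= exp 1) by (rewrite H; nra).
  replace (4/9) with (/ (9/4)) by field. apply Rinv_le_contravar; lra.
Qed.

Lemma L1 n p m : 0 < p <= 1/2 -> (1 <= m)%nat -> INR m <= INR n * p / 2 ->
  Ltail n p m <= exp (-1) * exp (- (1/20 * (INR n * p))).
Proof.
  intros Hp Hm Hmn. rewrite <- exp_plus. eapply Rle_trans. apply Ltail_bound; [lra|lia].
  apply exp_le'. pose proof inv_e. pose proof (pos_INR n).
  assert (0 <= INR n * p) by nra.
  assert (INR n * p * (5/9) <= INR n * p * (1 - / exp 1)) by (apply Rmult_le_compat_l; lra).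
  lra.
Qed.

Lemma L2 n p m : 0 < p <= 1/2 -> (1 <= n)%nat -> (1 <= m)%nat -> INR m <= INR n * p / 2 - 1 ->
  Ltail (n - 1) p m <= exp (-1) * exp (- (1/20 * (INR n * p))).
Proof.
  intros Hp Hn Hm Hmn. rewrite <- exp_plus. eapply Rle_trans. apply Ltail_bound; [lra|lia].
  apply exp_le'. pose proof inv_e. pose proof (pos_INR n).
  rewrite minus_INR by lia. simpl INR.
  assert (0 <= INR n * p) by nra.
  assert (INR n * p * (5/9) <= INR n * p * (1 - / exp 1)) by (apply Rmult_le_compat_l; lra).
  assert (0 < / exp 1) by (apply Rinv_0_lt_compat, exp_pos).
  nra.
Qed.

Lemma sum_nonneg f N : (forall x, (x <= N)%nat -> 0 <= f x) -> 0 <= sum_f_R0 f N.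
Proof.
  induction N; intros H; simpl. apply H; lia.
  assert (0 <= f (S N)) by (apply H; lia). assert (0 <= sum_f_R0 f N) by (apply IHN; intros; apply H; lia). lra.
Qed.

Lemma sum_ge_term f N t : (forall x, (x <= N)%nat -> 0 <= f x) -> (t <= N)%nat -> f t <= sum_f_R0 f N.
Proof.
  induction N; intros H Ht; simpl.
  - replace t with 0%nat by lia. lra.
  - destruct (Nat.eq_dec t (S N)).
    + subst. assert (0 <= sum_f_R0 f N) by (apply sum_nonneg; intros; apply H; lia). lra.
    + assert (f t <= sum_f_R0 f N) by (apply IHN; [intros; apply H; lia| lia]).
      assert (0 <= f (S N)) by (apply H; lia). lra.
Qed.

Lemma sum_ge_two f N : (forall x, (x <= N)%nat -> 0 <= f x) -> (1 <= N)%nat -> f 0%nat + f 1%nat <= sum_f_R0 f N.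
Proof.
  induction N; intros H Ht; [lia|]. destruct N.
  - simpl. lra.
  - change (sum_f_R0 f (S (S N))) with (sum_f_R0 f (S N) + f (S (S N))).
    assert (f 0%nat + f 1%nat <= sum_f_R0 f (S N)) by (apply IHN; [intros; apply H; lia| lia]).
    assert (0 <= f (S (S N))) by (apply H; lia). lra.
Qed.

Lemma fold_max_ge a l : In a l -> a <= fold_right Rmax 0 l.
Proof.
  induction l; simpl; [tauto|]. intros [H|H].
  - subst. apply Rmax_l.
  - eapply Rle_trans; [apply IHl; auto| apply Rmax_r].
Qed.

Lemma max_inv_ge k pi i : (1 <= i <= k)%nat -> / pi i <= max_inv k pi.
Proof.
  intros Hi. unfold max_inv. apply fold_max_ge. apply (in_map (fun i => / pi i)). apply in_seq. lia.
Qed.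

Lemma pi_bounds k pi i : is_prob_vector k pi -> (1 <= i <= k)%nat -> 0 <= pi i <= 1.
Proof.
  intros [Hnn Hs] Hi. split. apply Hnn; lia.
  rewrite <- Hs. replace i with (S (i - 1)) at 1 by lia.
  apply (sum_ge_term (fun x => pi (S x))). intros; apply Hnn; lia. lia.
Qed.

Lemma beta_eqs n k p pi j i : 0 < p < 1 ->
  let L := Ltail n p (j + k) in let L' := Ltail (n - 1) p (j + k - 1) in
  beta1 n k p pi j i = pi i * (1 - L) / p - L' * (1 - pi i) / (1 - p) /\
  beta0 n k p pi j i = (1 + p * L' / (1 - p)) * (1 - pi i).
Proof.
  intros Hp L L'. unfold beta1, beta0. rewrite !Btail_Ltail. fold L L'.
  split; field; lra.
Qed.

Lemma E_small n k p pi i : is_prob_vector k pi -> (2 <= k)%nat -> (1 <= i <= k)%nat ->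
  (forall i', (1 <= i' <= k)%nat -> 0 < pi i') ->
  80 * ln (max_inv k pi) <= INR n * p ->
  exp (- (1/20 * (INR n * p))) <= pi i / 8.
Proof.
  intros [Hnn Hs] Hk Hi Hpos HC.
  set (M := max_inv k pi).
  assert (H2 : pi 1%nat + pi 2%nat <= 1).
  { rewrite <- Hs. apply (sum_ge_two (fun x => pi (S x))). intros; apply Hnn; lia. lia. }
  assert (Hp1 := Hpos 1%nat ltac:(lia)). assert (Hp2 := Hpos 2%nat ltac:(lia)).
  assert (HM2 : 2 <= M).
  { destruct (Rle_dec (pi 1%nat) (1/2)).
    - eapply Rle_trans; [| apply (max_inv_ge k pi 1); lia].
      replace 2 with (/ (1/2)) by field. apply Rinv_le_contravar; lra.
    - eapply Rle_trans; [| apply (max_inv_ge k pi 2); lia].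
      replace 2 with (/ (1/2)) by field. apply Rinv_le_contravar; lra. }
  assert (Hpi := Hpos i Hi).
  assert (HMi : / pi i <= M) by (apply max_inv_ge; lia).
  assert (Hl1 : ln 2 <= ln M) by (apply ln_le'; lra).
  assert (Hl2 : ln (/ pi i) <= ln M) by (apply ln_le'; [apply Rinv_0_lt_compat; lra| lra]).
  rewrite ln_Rinv in Hl2 by lra.
  assert (Hln8 : ln 8 = 3 * ln 2).
  { replace 8 with (2 * (2 * 2)) by lra. rewrite !ln_mult by lra. ring. }
  apply Rle_trans with (exp (ln (pi i) - ln 8)).
  - apply exp_le'. fold M in HC. lra.
  - unfold Rminus. rewrite exp_plus, exp_Ropp, !exp_ln by lra. lra.
Qed.

Theorem lemma5 :
  (exists Cc c : R, 0 < Cc /\ 0 < c /\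
    forall (n k : nat) (p : R) (pi : nat -> R) (i j : nat),
      (2 <= n)%nat -> (1 <= k)%nat -> 0 < p <= 1 / 2 ->
      INR k <= INR n * p / 2 - 1 ->
      is_prob_vector k pi -> (1 <= i <= k)%nat ->
      (1 <= j)%nat -> INR j <= INR n * p / 2 - INR k ->
      Rabs (beta1 n k p pi j i - pi i / p) <= Cc * exp (- (c * (INR n * p))) / p /\
      Rabs (beta0 n k p pi j i - (1 - pi i)) <= Cc * p * exp (- (c * (INR n * p))))
  /\
  (exists C0 : R, 0 < C0 /\
    forall (n k : nat) (p : R) (pi : nat -> R) (i j : nat),
      (2 <= n)%nat -> (1 <= k)%nat -> 0 < p <= 1 / 2 ->
      INR k <= INR n * p / 2 - 1 ->
      is_prob_vector k pi -> (1 <= i <= k)%nat ->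
      (1 <= j)%nat -> INR j <= INR n * p / 2 - INR k ->
      (forall i', (1 <= i' <= k)%nat -> 0 < pi i') ->
      C0 * ln (max_inv k pi) <= INR n * p ->
      pi i / (2 * p) <= beta1 n k p pi j i /\
      0 <= beta0 n k p pi j i <= 1).
Proof.
  assert (Hgen : forall (n k : nat) (p : R) (pi : nat -> R) (i j : nat),
      (2 <= n)%nat -> (1 <= k)%nat -> 0 < p <= 1 / 2 ->
      is_prob_vector k pi -> (1 <= i <= k)%nat ->
      (1 <= j)%nat -> INR j <= INR n * p / 2 - INR k ->
      let E := exp (- (1/20 * (INR n * p))) in
      let L := Ltail n p (j + k) in let L' := Ltail (n - 1) p (j + k - 1) in
      0 <= pi i <= 1 /\ 0 <= L <= exp (-1) * E /\ 0 <= L' <= exp (-1) * E /\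
      beta1 n k p pi j i = pi i * (1 - L) / p - L' * (1 - pi i) / (1 - p) /\
      beta0 n k p pi j i = (1 + p * L' / (1 - p)) * (1 - pi i)).
  { intros n k p pi i j Hn Hk Hp Hpi Hi Hj Hjn E L L'.
    split; [eapply pi_bounds; eauto|].
    split; [split; [apply Ltail_nonneg; lra| apply L1; [lra|lia|]]|].
    { rewrite plus_INR. lra. }
    split; [split; [apply Ltail_nonneg; lra| apply L2; [lra|lia|lia|]]|].
    { rewrite minus_INR by lia. rewrite plus_INR. simpl INR. lra. }
    apply beta_eqs. lra. }
  assert (He1 : exp (-1) < 1/2).
  { replace (-1) with (- (1)) by ring. rewrite exp_Ropp. pose proof (exp_ineq1 1 ltac:(lra)).
    replace (1/2) with (/2) by field. apply Rinv_lt_contravar; lra. }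
  split.
  - exists 2, (1/20). split; [lra|]. split; [lra|].
    intros n k p pi i j Hn Hk Hp Hkn Hpi Hi Hj Hjn.
    destruct (Hgen n k p pi i j Hn Hk Hp Hpi Hi Hj Hjn) as (Hpib & HL & HL' & Hb1 & Hb0).
    set (E := exp (- (1/20 * (INR n * p)))) in *.
    set (L := Ltail n p (j + k)) in *. set (L' := Ltail (n - 1) p (j + k - 1)) in *.
    assert (HE : 0 < E) by apply exp_pos.
    assert (He0 : 0 < exp (-1)) by apply exp_pos.
    rewrite Hb1, Hb0.
    set (q := / p). set (r := / (1 - p)). set (a := pi i) in *.
    assert (Hq : p * q = 1) by (unfold q; field; lra).
    assert (Hr : (1 - p) * r = 1) by (unfold r; field; lra).
    assert (Hq2 : 2 <= q) by (unfold q; replace 2 with (/ (1/2)) by field; apply Rinv_le_contravar; lra).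
    assert (Hr0 : 0 < r) by (unfold r; apply Rinv_0_lt_compat; lra).
    assert (Hr2 : r <= 2) by (unfold r; replace 2 with (/ (1/2)) by field; apply Rinv_le_contravar; lra).
    assert (HLE : L <= E) by nra. assert (HLE' : L' <= E) by nra.
    assert (HaL : a * L <= E) by nra. assert (HaL' : L' * (1 - a) <= E) by nra.
    assert (P1 : 0 <= a * L) by (apply Rmult_le_pos; lra).
    assert (P2 : 0 <= L' * (1 - a)) by (apply Rmult_le_pos; lra).
    assert (P3 : 0 <= a * L * q) by (apply Rmult_le_pos; lra).
    assert (P4 : 0 <= L' * (1 - a) * r) by (apply Rmult_le_pos; lra).
    assert (P5 : a * L * q <= E * q) by (apply Rmult_le_compat_r; lra).
    assert (P6 : L' * (1 - a) * r <= E * 2) by (apply Rmult_le_compat; lra).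
    assert (P7 : E * 2 <= E * q) by (apply Rmult_le_compat_l; lra).
    assert (P8 : 0 <= p * (L' * (1 - a)) * r) by (apply Rmult_le_pos; [apply Rmult_le_pos|]; lra).
    assert (P9 : p * (L' * (1 - a)) * r <= p * E * 2) by (apply Rmult_le_compat; [apply Rmult_le_pos| | apply Rmult_le_compat_l|]; lra).
    unfold Rdiv. fold q r.
    split.
    + replace (a * (1 - L) * q - L' * (1 - a) * r - a * q) with (- (a * L * q + L' * (1 - a) * r)) by ring.
      rewrite Rabs_Ropp, Rabs_right by lra. lra.
    + replace ((1 + p * L' * r) * (1 - a) - (1 - a)) with (p * (L' * (1 - a)) * r) by ring.
      rewrite Rabs_right by lra. lra.
  - exists 80. split; [lra|].
    intros n k p pi i j Hn Hk Hp Hkn Hpi Hi Hj Hjn Hpos HC.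
    destruct (Hgen n k p pi i j Hn Hk Hp Hpi Hi Hj Hjn) as (Hpib & HL & HL' & Hb1 & Hb0).
    set (E := exp (- (1/20 * (INR n * p)))) in *.
    set (L := Ltail n p (j + k)) in *. set (L' := Ltail (n - 1) p (j + k - 1)) in *.
    assert (HE : 0 < E) by apply exp_pos.
    assert (HE1 : E <= 1) by (unfold E; apply Rle_trans with (exp 0); [apply exp_le'; pose proof (pos_INR n); nra| rewrite exp_0; lra]).
    assert (He0 : 0 < exp (-1)) by apply exp_pos.
    rewrite Hb1, Hb0.
    assert (Hpi_i : 0 < pi i) by (apply Hpos; lia).
    assert (Hq : pi i / (2 * p) = pi i * / p * / 2) by (field; lra).
    rewrite Hq.
    set (q := / p). set (r := / (1 - p)). set (a := pi i) in *.
    assert (Hqp : p * q = 1) by (unfold q; field; lra).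
    assert (Hrp : (1 - p) * r = 1) by (unfold r; field; lra).
    assert (Hq2 : 2 <= q) by (unfold q; replace 2 with (/ (1/2)) by field; apply Rinv_le_contravar; lra).
    assert (Hr0 : 0 < r) by (unfold r; apply Rinv_0_lt_compat; lra).
    assert (Hr2 : r <= 2) by (unfold r; replace 2 with (/ (1/2)) by field; apply Rinv_le_contravar; lra).
    assert (Hpr : p * r <= 1) by nra.
    unfold Rdiv. fold q r.
    destruct (Nat.eq_dec k 1) as [Hk1|Hk1].
    + subst k. assert (Hi1 : i = 1%nat) by lia. subst i.
      destruct Hpi as [_ Hs]. simpl in Hs. change (a = 1) in Hs. rewrite Hs.
      assert (L <= 1/2) by nra.
      split; nra.
    + assert (HEa : E <= a / 8).
      { unfold E, a. apply (E_small n k p pi i); auto; lia. }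
      assert (HLa : L <= a / 8) by nra. assert (HLa' : L' <= a / 8) by nra.
      assert (Ha1 : a <= 1) by lra.
      assert (Q1 : a * q * (3/8) <= a * q * (1/2 - L)) by (apply Rmult_le_compat_l; [apply Rmult_le_pos|]; lra).
      assert (Q2 : a * 2 <= a * q) by (apply Rmult_le_compat_l; lra).
      assert (Q3 : L' * (1 - a) * r <= (a/8) * 1 * 2) by (apply Rmult_le_compat; [apply Rmult_le_pos| | apply Rmult_le_compat|]; lra).
      assert (Q4 : 0 <= p * L' * r) by (apply Rmult_le_pos; [apply Rmult_le_pos|]; lra).
      assert (Q5 : p * L' * r <= L') by (replace (p * L' * r) with (L' * (p * r)) by ring; rewrite <- (Rmult_1_r L') at 2; apply Rmult_le_compat_l; lra).
      assert (Q6 : (1 - a) * (p * L' * r) <= 1 * (a / 8)) by (apply Rmult_le_compat; lra).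
      assert (Q7 : 0 <= (1 + p * L' * r) * (1 - a)) by (apply Rmult_le_pos; lra).
      split; [|split]; nra.
Qed.
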